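(* For every $n\ge0$, $Mlt_l(Q_n)\cong Mlt_r(Q_n)$.
   Context: Cayley--Dickson loops: $Q_0=\{1,-1\}\subset\mathbb{R}$ with conjugation $x^*=x$. For $n\ge1$, $Q_n=\{(x,0),(x,1)\mid x\in Q_{n-1}\}$ with multiplication $(x,0)(y,0)=(xy,0)$, $(x,0)(y,1)=(yx,1)$, $(x,1)(y,0)=(xy^*,1)$, $(x,1)(y,1)=(-y^*x,0)$ and conjugation $(x,0)^*=(x^*,0)$, $(x,1)^*=(-x,1)$, where $-(x,a)=(-x,a)$. $Q_n$ is a loop with neutral element $1=(1,0,\dots,0)$. For a loop $Q$, $L_x(a)=xa$, $R_x(a)=ax$, $Mlt_l(Q)=\langle L_x\mid x\in Q\rangle$, $Mlt_r(Q)=\langle R_x\mid x\in Q\rangle$. *)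

(* Defs.v *)
From HB Require Import structures.
From mathcomp Require Import all_boot all_fingroup.
Set Implicit Arguments. Unset Strict Implicit. Unset Printing Implicit Defensive.

(* Carrier of Q_n.  Q_0 = bool, with false = 1 and true = -1.
   Q_(m+1) = Q_m * bool, the pair (x, a) with a = false for (x,0), a = true for (x,1). *)
Fixpoint CDcar (n : nat) : finType :=
  match n with
  | 0 => bool
  | m.+1 => (CDcar m * bool)%type
  end.

Fixpoint CDops (n : nat) :
  (CDcar n -> CDcar n) * (CDcar n -> CDcar n) * (CDcar n -> CDcar n -> CDcar n) :=
  match n return (CDcar n -> CDcar n) * (CDcar n -> CDcar n)
                 * (CDcar n -> CDcar n -> CDcar n) with
  | 0 => (negb, id, addb)
  | m.+1 =>
    let: (ng, cj, ml) := CDops m in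
    ((fun u : CDcar m * bool => (ng u.1, u.2)),
     (fun u : CDcar m * bool => if u.2 then (ng u.1, true) else (cj u.1, false)),
     (fun u v : CDcar m * bool =>
        match u.2, v.2 with
        | false, false => (ml u.1 v.1, false)
        | false, true  => (ml v.1 u.1, true)
        | true,  false => (ml u.1 (cj v.1), true)
        | true,  true  => (ng (ml (cj v.1) u.1), false)
        end))
  end.

Definition CDneg n : CDcar n -> CDcar n := (CDops n).1.1.
Definition CDconj n : CDcar n -> CDcar n := (CDops n).1.2.
Definition CDmul n : CDcar n -> CDcar n -> CDcar n := (CDops n).2.

Fixpoint CDone (n : nat) : CDcar n :=
  match n return CDcar n with 0 => false | m.+1 => (CDone m, false) end.

Definition Mlt_l (n : nat) : {set {perm CDcar n}} :=
  <<[set p : {perm CDcar n} | [exists x, [forall a, p a == CDmul x a]]]>>%g.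

Definition Mlt_r (n : nat) : {set {perm CDcar n}} :=
  <<[set p : {perm CDcar n} | [exists x, [forall a, p a == CDmul a x]]]>>%g.

(* Main.v *)
Require Import Defs.
From HB Require Import structures.
From mathcomp Require Import all_boot all_fingroup.

Lemma CDprops (n : nat) :
  involutive (@CDneg n) /\ involutive (@CDconj n) /\
  (forall a, @CDconj n (@CDneg n a) = @CDneg n (@CDconj n a)) /\
  (forall a b, @CDneg n (@CDmul n a b) = @CDmul n (@CDneg n a) b) /\
  (forall a b, @CDneg n (@CDmul n a b) = @CDmul n a (@CDneg n b)) /\
  (forall a b, @CDconj n (@CDmul n a b) = @CDmul n (@CDconj n b) (@CDconj n a)).
Proof.
elim: n => [|m IH].
  rewrite /CDneg /CDconj /CDmul /=.
  split; first by case.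
  split; first by [].
  split; first by [].
  split; first by case; case.
  split; first by case; case.
  by case; case.
rewrite /CDneg /CDconj /CDmul /= in IH *.
case: (CDops m) IH => [[ng cj] ml] /= [ngK [cjK [cjng [ngl [ngr cjm]]]]].
have mlNl a b : ml (ng a) b = ng (ml a b) by rewrite ngl.
have mlNr a b : ml a (ng b) = ng (ml a b) by rewrite ngr.
have cjng' a : cj (ng a) = ng (cj a) by apply: cjng.
split; first by case=> a s /=; rewrite ngK.
split; first by case=> a [] /=; rewrite ?ngK ?cjK.
split; first by case=> a [] /=; rewrite ?cjng.
split; first by case=> a [] [b []] /=; do ?[rewrite mlNl|rewrite mlNr|rewrite cjng'|rewrite ngK].
split; first by case=> a [] [b []] /=; do ?[rewrite mlNl|rewrite mlNr|rewrite cjng'|rewrite ngK].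
case=> a [] [b []] /=; do ?[rewrite cjm|rewrite cjK|rewrite mlNl|rewrite mlNr|rewrite cjng'|rewrite ngK] => //.
Qed.

Theorem mainTheorem11 (n : nat) : Mlt_l n \isog Mlt_r n.
Proof.
have [_ [cjK [_ [_ [_ cjm]]]]] := CDprops n.
pose J := perm (can_inj cjK).
set A := [set p : {perm CDcar n} | [exists x, [forall a, p a == @CDmul n x a]]].
set B := [set p : {perm CDcar n} | [exists x, [forall a, p a == @CDmul n a x]]].
have JJ : (J^-1 = J)%g.
  by apply: (mulgI J); rewrite mulgV; apply/permP=> a; rewrite perm1 permM !permE /= cjK.
have AB : (A :^ J)%g = B.
  apply/setP=> p; rewrite mem_conjg JJ !inE.
  apply/existsP/existsP=> [[x /forallP Hx]|[x /forallP Hx]].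
    exists (@CDconj n x); apply/forallP=> a.
    have := eqP (Hx (@CDconj n a)).
    rewrite conjgE JJ !permM !permE /= => H.
    by rewrite cjK in H; rewrite -[p a]cjK H cjm cjK.
  exists (@CDconj n x); apply/forallP=> a.
  rewrite conjgE JJ !permM !permE /= (eqP (Hx _)) cjm cjK //.
rewrite /Mlt_l /Mlt_r -/A -/B -AB genJ.
exact: conj_isog.
Qed.
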